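(* Let $G$ be a finite group, $X=\{x_1,\dots,x_n\}$ with $n\ge2$, and fix a function $X\to G$ whose image generates $G$. Let $(\mathcal X_l)_{l\ge1}$ be a non-backtracking random walk on $(G,X)$ and $(\overline{\mathcal X}_l)$ its summed process. If $(\mathcal X_l)$ is aperiodic, then $\overline{\mathcal X}_l$ converges in distribution, as $l\to\infty$, to the uniform distribution on $G$. Otherwise there exists a subgroup $H\le G$ of index $2$ with $x_i\notin H$ for all $i$ such that $\overline{\mathcal X}_{2l}$ converges in distribution to the uniform distribution on $H$ and $\overline{\mathcal X}_{2l+1}$ converges in distribution to the uniform distribution on $G\setminus H$.
   Context: Let $G$ be a group, $X=\{x_1,\dots,x_n\}$ a set with $n\ge 2$, and fix a function $X\to G$; we identify each $x_i$ with its image in $G$. Let $\Omega=G\times\{\pm1,\pm2,\dots,\pm n\}$, with elements written $(g,\epsilon i)$, $g\in G$, $\epsilon=\pm1$, $i\in\{1,\dots,n\}$. A non-backtracking random walk on $(G,X)$ is a Markov chain $(\mathcal X_l)_{l\ge1}$ on $\Omega$ with transition probabilities $\mathbb P(\mathcal X_{l+1}=(g,\epsilon i)\mid \mathcal X_l=(h,\epsilon' j))=\alpha_{\epsilon' j,\epsilon i}$ if $g=hx_i^{\epsilon}$ and $\epsilon i\neq -\epsilon' j$, and $=0$ otherwise, where the $\alpha_{\epsilon' j,\epsilon i}$ are positive constants with $\sum_{\epsilon i\neq-\epsilon' j}\alpha_{\epsilon' j,\epsilon i}=1$ for each $\epsilon' j$; and with initial distribution $\mathbb P(\mathcal X_1=(g,\epsilon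 i))=\beta_{\epsilon i}$ if $g=x_i^{\epsilon}$ and $0$ otherwise, for positive constants $\beta_{\epsilon i}$ summing to $1$. Irreducibility and period refer to the Markov chain on the full state space $\Omega$. The summed process $\overline{\mathcal X}_l$ is the image of $\mathcal X_l$ under the projection $\Omega\to G$, i.e. $\mathbb P(\overline{\mathcal X}_l=g)=\sum_{\epsilon i}\mathbb P(\mathcal X_l=(g,\epsilon i))$. *)

(* Defs.v *)
(* Probabilities live in an arbitrary Archimedean real field R
   (e.g. the real numbers). *)
From HB Require Import structures.
From mathcomp Require Import all_boot all_order all_algebra all_fingroup.
Set Implicit Arguments. Unset Strict Implicit. Unset Printing Implicit Defensive.
Import Order.TTheory GRing.Theory Num.Theory.
Local Open Scope ring_scope.

(* Signed indices  \epsilon i  are encoded as  (b, i) : bool * 'I_n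
   with b = true for  +i  and b = false for  -i. *)
Definition sidx (n : nat) := (bool * 'I_n)%type.
Definition sopp (n : nat) (a : sidx n) : sidx n := (~~ a.1, a.2).

Section NBRW.
Variables (R : archiRealFieldType) (gT : finGroupType) (n : nat).
Variable x : 'I_n -> gT.
Variable alpha : sidx n -> sidx n -> R.
Variable beta : sidx n -> R.

Definition sgen (a : sidx n) : gT :=
  (if a.1 then x a.2 else (x a.2)^-1)%g.

Definition state := (gT * sidx n)%type.

Definition trans (s t : state) : R :=
  if (t.1 == (s.1 * sgen t.2)%g) && (t.2 != sopp s.2) then alpha s.2 t.2 else 0.

Fixpoint ntrans (l : nat) (s t : state) : R :=
  if l is l'.+1 then \sum_(u : state) ntrans l' s u * trans u t
  else (s == t)%:R.

Definition aperiodic : Prop :=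
  forall (s : state) (d : nat),
    (forall l : nat, (0 < l)%N -> 0 < ntrans l s s -> (d %| l)%N) -> d = 1%N.

Definition init_dist (s : state) : R :=
  if s.1 == sgen s.2 then beta s.2 else 0.

(* dist l s = P(X_l = s) for l >= 1 (dist 0 is a dummy zero). *)
Fixpoint dist (l : nat) : state -> R :=
  match l with
  | 0 => fun _ => 0
  | 1 => init_dist
  | l'.+1 => fun t => \sum_(s : state) dist l' s * trans s t
  end.

Definition summed (l : nat) (g : gT) : R :=
  \sum_(a : sidx n) dist l (g, a).

End NBRW.

Definition converges_to (R : archiRealFieldType) (u : nat -> R) (L : R) : Prop :=
  forall eps : R, 0 < eps -> exists N : nat, forall l : nat, (N <= l)%N -> `|u l - L| < eps.

(* Main.v *)
Require Import Defs.
From HB Require Import structures.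
From mathcomp Require Import all_boot all_order all_algebra all_fingroup.
From mathcomp Require Import zify ring lra.
Set Implicit Arguments. Unset Strict Implicit. Unset Printing Implicit Defensive.
Import Order.TTheory GRing.Theory Num.Theory.
Local Open Scope ring_scope.

Local Open Scope nat_scope.

Lemma frob (S : nat -> Prop) a : S 0%N -> (forall u v, S u -> S v -> S (u + v)%N) ->
  S (2 * a)%N -> S (2 * a + 2)%N -> forall N, (a * a <= N)%N -> S (2 * N)%N.
Proof.
move=> S0 SD Sa Sb.
have Smul : forall c k, S c -> S (k * c)%N.
  by move=> c k hc; elim: k => [|k IH]; rewrite ?mul0n // mulSn; apply: SD.
move=> N hN; case: a Sa Sb hN => [|a] Sa Sb hN.
  by rewrite mulnC; apply: Smul.
have hq : (a.+1 <= N %/ a.+1)%N by rewrite leq_divRL.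
have hr : (N %% a.+1 < a.+1)%N by rewrite ltn_mod.
have -> : (2 * N = (N %/ a.+1 - N %% a.+1) * (2 * a.+1) + (N %% a.+1) * (2 * a.+1 + 2))%N.
  rewrite {1}(divn_eq N a.+1).
  move: (N %/ a.+1) (N %% a.+1) hq hr => q r h1 h2; nia.
by apply: SD; apply: Smul.
Qed.

Lemma ar1 o : (0 < o)%N -> odd o -> (o - (o.-1 %/ 2) = (o.-1 %/ 2).+1)%N.
Proof. move=> h1 h2. rewrite -(odd_double_half o) h2 /= in h1 *. rewrite -muln2 mulnK //. lia. Qed.
Lemma ar2 o : (0 < o)%N -> ~~ odd o -> (o - (o.-1 %/ 2) = (o.-1 %/ 2).+2)%N.
Proof. move=> h1 h2. lia. Qed.

Lemma ev_fin (T : finType) (Q : nat -> T -> Prop) :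
  (forall t, exists M, forall l, (M <= l)%N -> Q l t) ->
  exists M, forall t l, (M <= l)%N -> Q l t.
Proof.
move=> h; have [f hf] := fin_all_exists h.
exists (\max_t f t)%N => t l hl; apply: hf; exact: leq_trans (leq_bigmax t) hl.
Qed.

Local Open Scope ring_scope.

Section Main.
Variables (R : archiRealFieldType) (gT : finGroupType) (n : nat).
Variable x : 'I_n -> gT.
Variable alpha : sidx n -> sidx n -> R.
Variable beta : sidx n -> R.
Hypothesis Hapos : forall a b : sidx n, b != sopp a -> 0 < alpha a b.
Hypothesis Hasum : forall a : sidx n, \sum_(b : sidx n | b != sopp a) alpha a b = 1.
Hypothesis Hbpos : forall a : sidx n, 0 < beta a.
Hypothesis Hbsum : \sum_(a : sidx n) beta a = 1.
Hypothesis Hn : (2 <= n)%N.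
Hypothesis Hgen : <<[set x i | i : 'I_n]>>%g = [set: gT].
Local Notation state := (state gT n).
Local Notation P := (trans x alpha).
Local Notation Pn := (ntrans x alpha).
Local Notation D := (dist x alpha beta).
Local Notation sg := (sgen x).



Lemma sum_pick (f : sidx n -> gT) (c : sidx n -> R) :
  \sum_(t : state) (if t.1 == f t.2 then c t.2 else 0) = \sum_a c a.
Proof.
rewrite -(pair_big xpredT xpredT (fun g a => if g == f a then c a else 0)) /=.
rewrite exchange_big /=; apply: eq_bigr => a _.
rewrite (bigD1 (f a)) //= eqxx big1 ?addr0 // => g /negbTE ->; done.
Qed.

Lemma trans_ge0 s t : 0 <= P s t.
Proof. rewrite /trans; case: ifP => // /andP[_ h]; exact: ltW (Hapos h). Qed.

Lemma trans_sum s : \sum_t P s t = 1.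
Proof.
rewrite -(Hasum s.2).
rewrite (eq_bigr (fun t : state => if t.1 == (s.1 * sg t.2)%g then
   (if t.2 != sopp s.2 then alpha s.2 t.2 else 0) else 0)); last first.
  by move=> t _; rewrite /trans; case: (t.1 == (s.1 * sg t.2)%g).
rewrite [RHS]big_mkcond; exact: (sum_pick (fun b => s.1 * sg b)%g (fun b => if b != sopp s.2 then alpha s.2 b else 0)).
Qed.

Lemma ntrans_ge0 l s t : 0 <= Pn l s t.
Proof.
elim: l t => [|l IH] t /=; first by rewrite ler0n.
apply: sumr_ge0 => u _; apply: mulr_ge0 => //; exact: trans_ge0.
Qed.

Lemma ntrans_sum l s : \sum_t Pn l s t = 1.
Proof.
elim: l => [|l IH] /=.
  by rewrite (bigD1 s) //= eqxx big1 ?addr0 // => t /negbTE; rewrite eq_sym => ->.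
rewrite exchange_big /= -{}IH; apply: eq_bigr => u _.
by rewrite -mulr_sumr trans_sum mulr1.
Qed.

Lemma ntrans1 s t : Pn 1 s t = P s t.
Proof.
rewrite /= (bigD1 s) //= eqxx mul1r big1 ?addr0 // => u /negbTE.
by rewrite eq_sym => ->; rewrite mul0r.
Qed.

Lemma ntransS l s t : Pn l.+1 s t = \sum_u Pn l s u * P u t.
Proof. by []. Qed.

Lemma ntransD m k s t : Pn (m + k) s t = \sum_u Pn m s u * Pn k u t.
Proof.
elim: k t => [|k IH] t.
  rewrite addn0 /= (bigD1 t) //= eqxx mulr1 big1 ?addr0 // => u /negbTE ->.
  by rewrite mulr0.
rewrite addnS ntransS.
under eq_bigr do rewrite IH mulr_suml.
rewrite exchange_big /=; apply: eq_bigr => u _.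
rewrite mulr_sumr; apply: eq_bigr => v _; by rewrite mulrA.
Qed.

Lemma le_sum_term (T : finType) (F : T -> R) (i : T) :
  (forall j, 0 <= F j) -> F i <= \sum_j F j.
Proof.
move=> h; rewrite (bigD1 i) //= lerDl; apply: sumr_ge0 => j _; exact: h.
Qed.

Definition pos l s t := 0 < Pn l s t.

Lemma pos0 s : pos 0 s s.
Proof. by rewrite /pos /= eqxx ltr01. Qed.

Lemma pos_trans l1 l2 s u t : pos l1 s u -> pos l2 u t -> pos (l1 + l2) s t.
Proof.
rewrite /pos ntransD => h1 h2.
apply: (lt_le_trans (mulr_gt0 h1 h2)).
rewrite (bigD1 u) //= lerDl; apply: sumr_ge0 => v _.
apply: mulr_ge0; exact: ntrans_ge0.
Qed.

Lemma pos_step s b : b != sopp s.2 -> pos 1 s ((s.1 * sg b)%g, b).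
Proof. by move=> h; rewrite /pos ntrans1 /trans /= eqxx h /=; apply: Hapos. Qed.

Definition wprod (w : seq (sidx n)) : gT := (\prod_(b <- w) sg b)%g.
Local Notation wp := wprod.
Definition nbr (a b : sidx n) := b != sopp a.

Lemma pos_word w s : path nbr s.2 w -> pos (size w) s ((s.1 * wprod w)%g, last s.2 w).
Proof.
elim: w s => [|b w IH] s /=.
  by rewrite /wprod big_nil mulg1 /= => _; case: s => ? ?; exact: pos0.
move=> /andP[hb hw].
have := pos_trans (pos_step hb) (IH ((s.1 * sg b)%g, b) hw).
by rewrite /wprod big_cons mulgA.
Qed.

Definition tau (h : gT) (s : state) : state := ((h * s.1)%g, s.2).

Lemma tau_inj h : injective (tau h).
Proof. by move=> [a b] [c d] [/mulgI -> ->]. Qed.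

Lemma trans_tau h s t : P (tau h s) (tau h t) = P s t.
Proof. by rewrite /trans /= -mulgA (inj_eq (mulgI h)). Qed.

Lemma ntrans_tau h l s t : Pn l (tau h s) (tau h t) = Pn l s t.
Proof.
elim: l t => [|l IH] t /=; first by rewrite (inj_eq (@tau_inj h)).
rewrite (reindex_inj (@tau_inj h)) /=; apply: eq_bigr => u _.
by rewrite IH trans_tau.
Qed.

Lemma distS l t : (0 < l)%N -> D l.+1 t = \sum_s D l s * P s t.
Proof. by case: l. Qed.

Lemma distD l m t : (0 < l)%N -> D (l + m) t = \sum_s D l s * Pn m s t.
Proof.
move=> hl; elim: m t => [|m IH] t.
  rewrite addn0 (bigD1 t) //= eqxx mulr1 big1 ?addr0 // => u /negbTE.
  by rewrite eq_sym => ->; rewrite mulr0.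
rewrite addnS distS ?(leq_trans hl) ?leq_addr //.
under eq_bigr do rewrite IH mulr_suml.
rewrite exchange_big /=; apply: eq_bigr => u _.
rewrite mulr_sumr; apply: eq_bigr => v _; by rewrite mulrA.
Qed.

Lemma dist_ge0 l s : 0 <= D l s.
Proof.
elim: l s => [|l IH] s //; case: l IH => [|l] IH.
  by rewrite /= /init_dist; case: ifP => // _; exact: ltW.
rewrite distS //; apply: sumr_ge0 => u _; apply: mulr_ge0 => //; exact: trans_ge0.
Qed.

Lemma dist_sum l : (0 < l)%N -> \sum_s D l s = 1.
Proof.
elim: l => [|l IH] // _; case: l IH => [|l] IH.
  by rewrite /= -Hbsum -(sum_pick sg beta).
rewrite exchange_big /= -{}IH //; apply: eq_bigr => u _.
by rewrite -mulr_sumr trans_sum mulr1.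
Qed.


Lemma wprod_cat w1 w2 : wp (w1 ++ w2) = (wp w1 * wp w2)%g.
Proof. by rewrite /wprod big_cat. Qed.

Lemma gen_words (A : {set gT}) (Q : seq (sidx n) -> bool) :
  Q [::] -> (forall w1 w2, Q w1 -> Q w2 -> Q (w1 ++ w2)) ->
  (forall a, a \in A -> exists w, Q w /\ a = wp w) ->
  forall g, g \in <<A>>%g -> exists w, Q w /\ g = wp w.
Proof.
move=> Q0 Qc hA g /gen_prodgP [k [c hc ->]].
elim: k c hc => [|k IH] c hc.
  by exists [::]; rewrite big_ord0 /wprod big_nil.
rewrite big_ord_recl.
have [w1 [q1 e1]] := hA _ (hc ord0).
have [w2 [q2 e2]] := IH (fun i => c (lift ord0 i)) (fun i => hc _).
by exists (w1 ++ w2); split; [exact: Qc | rewrite wprod_cat -e1 -e2].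
Qed.

Lemma pos_words g : exists w, all (fun b : sidx n => b.1) w /\ g = wp w.
Proof.
apply: (gen_words (A := [set x i | i : 'I_n])) => //.
- by move=> w1 w2 h1 h2; rewrite all_cat h1 h2.
- move=> a /imsetP [i _ ->]; exists [:: (true, i)]; split => //.
  by rewrite /wprod big_seq1.
- by rewrite Hgen inE.
Qed.

Definition Hs : {set gT} := <<[set (x ij.1 * x ij.2)%g | ij : 'I_n * 'I_n]>>%g.

Lemma Hs_pair i j : (x i * x j)%g \in Hs.
Proof. by apply: mem_gen; apply/imsetP; exists (i, j). Qed.

Lemma Hs_words g : g \in Hs ->
  exists w, (all (fun b : sidx n => b.1) w && ~~ odd (size w)) /\ g = wp w.
Proof.
apply: gen_words => //.
- move=> w1 w2 /andP[a1 o1] /andP[a2 o2].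
  by rewrite all_cat a1 a2 size_cat oddD (negbTE o1) (negbTE o2).
- move=> a /imsetP [[i j] _ ->]; exists [:: (true, i); (true, j)]; split => //.
  by rewrite /wprod !big_cons big_nil mulg1.
Qed.

Definition i1 : 'I_n := Ordinal (leq_trans (isT : (0 < 2)%N) Hn).
Definition i2 : 'I_n := Ordinal Hn.
Lemma i12 : i1 != i2. Proof. by []. Qed.
Local Notation x0 := (x i1).

Lemma parw w : all (fun b : sidx n => b.1) w ->
  if odd (size w) then (x0 * wp w)%g \in Hs else wp w \in Hs.
Proof.
elim: w => [|[b i] w IH] /=; first by rewrite /wprod big_nil group1.
move=> /andP[/= -> aw]; have {IH} := IH aw.
rewrite /wprod big_cons /= -/(wprod w).
case: (odd (size w)) => /= h.
  have -> : (x i * wp w = (x i * x0) * (x0 * x0)^-1 * (x0 * wp w))%g.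
    by rewrite invMg !mulgA mulgK mulgKV.
  by apply: groupM => //; apply: groupM; rewrite ?groupV Hs_pair.
by rewrite mulgA groupM ?Hs_pair.
Qed.

Lemma split_H g : g \in Hs \/ (x0 * g)%g \in Hs.
Proof.
have [w [aw ->]] := pos_words g; have := parw aw.
by case: (odd _) => h; [right | left].
Qed.

Section Index2.
Hypothesis HnT : Hs != [set: gT].

Lemma x0_notin : x0 \notin Hs.
Proof.
apply/negP => h; move/negP: HnT; apply; apply/eqP/setP => g; rewrite inE.
by case: (split_H g) => // hg; rewrite -(groupMl _ h).
Qed.

Lemma x_notin i : x i \notin Hs.
Proof.
apply/negP => h; have := Hs_pair i i1; rewrite groupMl //.
by apply/negP; exact: x0_notin.
Qed.

Lemma notin_H g : g \notin Hs -> (x0 * g)%g \in Hs.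
Proof. by case: (split_H g) => // ->. Qed.

Lemma parM g h : ((g * h)%g \notin Hs) = (g \notin Hs) (+) (h \notin Hs).
Proof.
case hg: (g \in Hs); case hh: (h \in Hs) => /=.
- by rewrite groupM.
- by rewrite groupMl // hh.
- by rewrite groupMr // hg.
have hg' : (g * x0^-1)%g \in Hs.
  have : (x0 * g^-1)%g \in Hs by apply: notin_H; rewrite groupV hg.
  by move/(groupVr); rewrite invMg invgK.
have hh' := notin_H (negbT hh).
have e : (g * h = (g * x0^-1) * (x0 * h))%g by rewrite mulgA mulgKV.
by rewrite e groupM.
Qed.

Lemma compl_H : ~: Hs = (x0^-1 *: Hs)%g.
Proof.
apply/setP => g; rewrite inE mem_lcoset invgK.
case hg: (g \in Hs) => /=.
  by rewrite groupMr //; apply/esym/negbTE; exact: x0_notin.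
by apply/esym; apply: notin_H; rewrite hg.
Qed.

Lemma card_compl : #|~: Hs| = #|Hs|.
Proof. by rewrite compl_H card_lcoset. Qed.

Lemma index2 : #|[set: gT] : <<[set (x ij.1 * x ij.2)%g | ij : 'I_n * 'I_n]>>|%g = 2%N.
Proof.
have := Lagrange (subsetT (<<[set (x ij.1 * x ij.2)%g | ij : 'I_n * 'I_n]>>%G)).
rewrite /= -/Hs cardsT -(cardsC Hs) card_compl addnn -mul2n [(2 * _)%N]mulnC.
have := cardG_gt0 (<<[set (x ij.1 * x ij.2)%g | ij : 'I_n * 'I_n]>>%G).
rewrite /= -/Hs; case: #|Hs| => // k _ /eqP; rewrite eqn_mul2l /= => /eqP //.
Qed.

End Index2.


Definition reach (s t : state) := exists l, pos l s t.

Lemma reach_trans s u t : reach s u -> reach u t -> reach s t.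
Proof. by move=> [l1 h1] [l2 h2]; exists (l1 + l2)%N; apply: pos_trans h1 h2. Qed.

Lemma path_pos a w : a.1 = true -> all (fun b : sidx n => b.1) w -> path nbr a w.
Proof.
elim: w a => [|b w IH] a //= ha /andP[hb hw].
rewrite IH // andbT /nbr /sopp; case: a ha => [c i] /= ->.
by case: b hb => [c' j] /= ->.
Qed.

Lemma reach_pp g i g' j : reach (g, (true, i)) (g', (true, j)).
Proof.
have [w [aw ew]] := pos_words (g^-1 * g' * (x j)^-1)%g.
exists (size (w ++ [:: (true, j)])).
have := pos_word (s := (g, (true, i))) (w := w ++ [:: (true, j)]).
rewrite /= last_cat /= wprod_cat -ew /wprod big_seq1 /= mulgKV mulKVg.
by apply; apply: path_pos => //; rewrite all_cat aw.
Qed.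

Definition oth (j : 'I_n) : 'I_n := if j == i1 then i2 else i1.
Lemma oth_neq j : oth j != j.
Proof. rewrite /oth; have [->|h] := eqVneq j i1; first by []. by rewrite eq_sym. Qed.

Lemma reach_to_pos s : exists g i, reach s (g, (true, i)).
Proof.
case: s => g [[|] i].
  by exists g, i; exists 0%N; exact: pos0.
exists (g * x (oth i))%g, (oth i); exists 1%N.
have := pos_step (s := (g, (false, i))) (b := (true, oth i)).
apply; rewrite /sopp /= xpair_eqE /=; exact: oth_neq.
Qed.

Lemma reach_all s t : reach s t.
Proof.
have [g [i h1]] := reach_to_pos s.
apply: reach_trans h1 _; case: t => g' [[|] j]; first exact: reach_pp.
apply: reach_trans (reach_pp g i (g' * x j)%g (oth j)) _.
exists 1%N.
have := pos_step (s := ((g' * x j)%g, (true, oth j))) (b := (false, j)).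
rewrite /= mulgK; apply; rewrite /sopp /= xpair_eqE /= eq_sym; exact: oth_neq.
Qed.

Definition T0 : state := (1%g, (true, i2)).
Definition S l := pos l T0 T0.

Lemma S0 : S 0. Proof. exact: pos0. Qed.
Lemma SD u v : S u -> S v -> S (u + v)%N.
Proof. exact: pos_trans. Qed.

Lemma wprod_nseq m b : wp (nseq m b) = (sgen x b ^+ m)%g.
Proof.
elim: m => [|m IH]; first by rewrite /wprod big_nil.
by rewrite /wprod /= big_cons -/(wprod _) IH expgS.
Qed.

Lemma path_B m a : (a == (true, i2)) || (a == (false, i1)) ->
  path nbr a (nseq m (false, i1) ++ [:: (true, i2)]).
Proof.
have h12 : i1 != i2 by [].
elim: m a => [|m IH] a ha /=.
  by rewrite andbT /nbr /sopp; case/orP: ha => /eqP ->.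
rewrite IH ?eqxx ?orbT // andbT /nbr /sopp.
by case/orP: ha => /eqP ->.
Qed.

Lemma loops_A : exists A, S (2 * A)%N /\ S (2 * A + 2)%N.
Proof.
set o := #[x i1]%g.
set k := (o.-1 %/ 2)%N.
have ho : (0 < o)%N := order_gt0 _.
set e1 := (x i1 ^+ k * x i2)%g.
have [e he] := reach_all (e1, (true, i2)) T0.
have hA : S (k.+1 + e)%N.
  apply: pos_trans he.
  have := pos_word (s := T0) (w := nseq k (true, i1) ++ [:: (true, i2)]).
  rewrite size_cat size_nseq addn1 /= last_cat /= wprod_cat wprod_nseq mul1g.
  rewrite /wprod big_seq1; apply; apply: path_pos => //.
  by rewrite all_cat /= andbT; apply/allP => b /nseqP [->].
have hB : S ((o - k).+1 + e)%N.
  apply: pos_trans he.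
  have := pos_word (s := T0) (w := nseq (o - k) (false, i1) ++ [:: (true, i2)]).
  rewrite size_cat size_nseq addn1 /= last_cat /= wprod_cat wprod_nseq mul1g.
  rewrite /wprod big_seq1 /=.
  have -> : ((x i1)^-1 ^+ (o - k) = x i1 ^+ k)%g.
    rewrite expgVn; apply: (mulgI (x i1 ^+ (o - k))%g).
    rewrite mulgV -expgD subnK ?expg_order //.
    rewrite /k; apply: leq_trans (leq_div _ _) _; exact: leq_pred.
  apply; apply: path_B; by rewrite eqxx.
exists (k.+1 + e)%N; split; first by rewrite mul2n -addnn; apply: SD.
have [hodd|hev] := boolP (odd o).
  rewrite (ar1 ho hodd) -/k in hB.
  by have := SD hB hB; congr S; lia.
rewrite (ar2 ho hev) -/k in hB.
by have := SD hA hB; congr S; lia.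
Qed.


Lemma loop_odd : x i1 \in Hs -> exists B, odd B /\ S B.
Proof.
move=> /Hs_words [w [/andP[aw ow] ew]].
have [e he] := reach_all ((x i1 * x i2)%g, (true, i2)) T0.
have h1 : S (2 + e)%N.
  apply: pos_trans he.
  have := pos_word (s := T0) (w := [:: (true, i1); (true, i2)]).
  by rewrite /wprod !big_cons big_nil /= !mul1g mulg1; apply.
have h2 : S ((size w).+1 + e)%N.
  apply: pos_trans he.
  have := pos_word (s := T0) (w := w ++ [:: (true, i2)]).
  rewrite size_cat addn1 /= last_cat /= wprod_cat -ew mul1g /wprod big_seq1.
  apply; apply: path_pos => //; by rewrite all_cat aw.
have [oe|oe] := boolP (odd e).
  by exists (2 + e)%N; split; rewrite // oddD oe.
by exists ((size w).+1 + e)%N; split; rewrite // oddD /= (negbTE ow) (negbTE oe).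
Qed.

Lemma S_all : x i1 \in Hs -> exists N0, forall N, (N0 <= N)%N -> S N.
Proof.
move=> hx; have [A [hA1 hA2]] := loops_A.
have [B [oB hB]] := loop_odd hx.
have fr := frob S0 SD hA1 hA2.
exists (2 * (A * A) + B)%N => N hN.
have [oN|eN] := boolP (odd N).
  have ev : odd (N - B) = false by rewrite oddB ?oN ?oB //; lia.
  have e2 := halfK (N - B); rewrite ev subn0 -muln2 in e2.
  have -> : N = (2 * (N - B)./2 + B)%N by lia.
  apply: SD hB; apply: fr; lia.
have e2 := halfK N; rewrite (negbTE eN) subn0 -muln2 in e2.
have -> : N = (2 * N./2)%N by lia.
apply: fr; lia.
Qed.

Lemma primitive : x i1 \in Hs -> exists M, forall s t l, (M <= l)%N -> pos l s t.
Proof.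
move=> hx; have [N0 hN0] := S_all hx.
have := @ev_fin _ (fun l (p : state * state) => pos l p.1 p.2).
case.
  move=> [s t]; have [e1 h1] := reach_all s T0.
  have [e2 h2] := reach_all T0 t.
  exists (e1 + N0 + e2)%N => l hl /=.
  have -> : l = (e1 + (l - e1 - e2) + e2)%N by lia.
  apply: pos_trans h2; apply: pos_trans h1 _; apply: hN0; lia.
by move=> M hM; exists M => s t l hl; exact: (hM (s, t) l hl).
Qed.

Lemma sum_pos_ex (F : state -> R) : (forall i, 0 <= F i) -> 0 < \sum_i F i -> exists i, 0 < F i.
Proof.
move=> h hs; case/boolP: [exists i, 0 < F i] => [/existsP //|/existsPn hn].
have : \sum_i F i = 0.
  by apply: big1 => i _; apply: le_anti; rewrite h andbT leNgt hn.
by move=> e; rewrite e ltxx in hs.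
Qed.

Lemma mul_gt0_lr (a b : R) : 0 <= a -> 0 <= b -> 0 < a * b -> 0 < a /\ 0 < b.
Proof.
move=> ha hb; rewrite !lt_def ha hb mulf_eq0 negb_or => /andP[/andP[-> ->] _] //.
Qed.

Lemma trans_pos_eq u t : 0 < P u t -> t.1 = (u.1 * sg t.2)%g.
Proof. by rewrite /trans; case: eqP => // _; rewrite ltxx. Qed.

Section Index2b.
Hypothesis HnT : Hs != [set: gT].

Lemma sgen_notin b : sg b \notin Hs.
Proof. by case: b => [[|] i] /=; rewrite ?groupV x_notin. Qed.

Lemma pos_par l s t : pos l s t -> ((s.1^-1 * t.1)%g \notin Hs) = odd l.
Proof.
elim: l t => [|l IH] t.
  rewrite /pos /=; case: eqP => [<-|]; last by rewrite ltxx.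
  by rewrite mulVg group1.
rewrite /pos ntransS => hp.
have [u hu] := sum_pos_ex (fun u => mulr_ge0 (ntrans_ge0 l s u) (trans_ge0 u t)) hp.
have [h1 h2] := mul_gt0_lr (ntrans_ge0 l s u) (trans_ge0 u t) hu.
rewrite (trans_pos_eq h2) mulgA parM // IH // sgen_notin /=.
by rewrite addbT.
Qed.

Lemma dist_par l t : (0 < l)%N -> 0 < D l t -> (t.1 \notin Hs) = odd l.
Proof.
elim: l t => [|l IH] t // _; case: l IH => [|l] IH.
  rewrite /= /init_dist; case: eqP => [->|]; last by rewrite ltxx.
  by rewrite sgen_notin.
rewrite distS // => hp.
have [u hu] := sum_pos_ex (fun u => mulr_ge0 (dist_ge0 l.+1 u) (trans_ge0 u t)) hp.
have [h1 h2] := mul_gt0_lr (dist_ge0 _ u) (trans_ge0 u t) hu.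
by rewrite (trans_pos_eq h2) parM // IH // sgen_notin addbT.
Qed.

Lemma even_prim : exists M, forall s t l, (M <= l)%N ->
  (s.1^-1 * t.1)%g \in Hs -> pos (2 * l) s t.
Proof.
have [A [hA1 hA2]] := loops_A.
have fr := frob S0 SD hA1 hA2.
have := @ev_fin _ (fun l (p : state * state) =>
  (p.1.1^-1 * p.2.1)%g \in Hs -> pos (2 * l) p.1 p.2).
case.
  move=> [s t]; have [e1 h1] := reach_all s T0.
  have [e2 h2] := reach_all T0 t.
  have p1 := pos_par h1; have p2 := pos_par h2.
  rewrite /= mulg1 groupV in p1; rewrite /= invg1 mul1g in p2.
  exists ((e1 + e2)./2 + A * A)%N => l hl /= hst.
  have := parM (s.1^-1) t.1; rewrite hst /= groupV p1 p2.
  move=> /esym ho; have := halfK (e1 + e2); rewrite oddD ho subn0 -muln2 => e.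
  have -> : (2 * l = e1 + 2 * (l - (e1 + e2)./2) + e2)%N by lia.
  apply: pos_trans h2; apply: pos_trans h1 _; apply: fr; lia.
by move=> M hM; exists M => s t l hl; exact: (hM (s, t) l hl).
Qed.

End Index2b.

Lemma contract (K : state -> state -> R) (C : pred state) (dl : R) (eta : state -> R) t0 :
  (forall s t, 0 <= K s t) -> (forall s, \sum_t K s t = 1) ->
  (forall s t, C s -> C t -> dl <= K s t) -> (forall s, ~~ C s -> eta s = 0) ->
  \sum_s eta s = 0 -> C t0 -> 0 <= dl ->
  \sum_t `|\sum_s eta s * K s t| <= (1 - dl) * \sum_s `|eta s|.
Proof.
move=> K0 K1 KC etaC eta0 Ct0 dl0.
have step : forall t, `|\sum_s eta s * K s t| <= \sum_s `|eta s| * (K s t - (C t)%:R * dl).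
  move=> t; case Ct: (C t).
    have -> : \sum_s eta s * K s t = \sum_s eta s * (K s t - dl).
      under [RHS]eq_bigr do rewrite mulrBr.
      by rewrite sumrB -mulr_suml eta0 mul0r subr0.
    apply: le_trans (ler_norm_sum _ _ _) _; rewrite mul1r.
    apply: ler_sum => s _; rewrite normrM.
    case Cs: (C s); last by rewrite etaC ?Cs // normr0 !mul0r.
    by rewrite (ger0_norm (x := K s t - dl)) // subr_ge0 KC.
  apply: le_trans (ler_norm_sum _ _ _) _; rewrite mul0r.
  by apply: ler_sum => s _; rewrite normrM subr0 (ger0_norm (K0 s t)).
apply: le_trans (ler_sum _ (fun t _ => step t)) _.
rewrite exchange_big /=.
have hC : 1 <= \sum_(t : state) (C t)%:R :> R.
  rewrite (bigD1 t0) //= Ct0 lerDl; apply: sumr_ge0 => t _; exact: ler0n.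
rewrite mulr_sumr; apply: ler_sum => s _.
rewrite -mulr_sumr sumrB K1 -mulr_suml mulrC; apply: ler_wpM2r => //.
by rewrite lerD2l lerN2 -[X in X <= _]mul1r; apply: ler_wpM2r.
Qed.

Lemma sum_tau h (F : state -> R) : \sum_s F (tau h s) = \sum_s F s.
Proof. by rewrite [RHS](reindex_inj (@tau_inj h)). Qed.

Definition eta (h : gT) l (s : state) := D l s - D l (tau h s).
Definition E (h : gT) l := \sum_s `|eta h l s|.

Lemma eta_step h l m t : (0 < l)%N -> eta h (l + m) t = \sum_s eta h l s * Pn m s t.
Proof.
move=> hl; rewrite /eta !distD //.
rewrite [X in _ - X](reindex_inj (@tau_inj h)) /=.
rewrite -sumrB; apply: eq_bigr => s _; by rewrite ntrans_tau mulrBl.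
Qed.

Lemma eta_sum h l : (0 < l)%N -> \sum_s eta h l s = 0.
Proof.
move=> hl; rewrite /eta sumrB dist_sum //.
by rewrite (sum_tau h (fun s => D l s)) dist_sum // subrr.
Qed.

Lemma E_le2 h l : (0 < l)%N -> E h l <= 2.
Proof.
move=> hl; rewrite /E.
apply: le_trans (ler_sum _ (fun s _ => ler_normB (D l s) (D l (tau h s)))) _.
rewrite big_split /=.
rewrite (sum_tau h (fun s => `|D l s|)).
under eq_bigr do rewrite ger0_norm ?dist_ge0 //.
by rewrite dist_sum.
Qed.

Lemma geom (rho dl : R) j : 0 <= rho -> rho + dl = 1 -> 0 <= dl ->
  rho ^+ j * (1 + j%:R * dl) <= 1.
Proof.
move=> r0 e d0; elim: j => [|j IH]; first by rewrite expr0 mul0r addr0 mul1r.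
have hr1 : rho ^+ j <= 1 by apply: exprn_ile1 => //; lra.
rewrite exprS -mulrA -natr1 mulrDl mul1r addrA mulrDr.
have : rho * (rho ^+ j * (1 + j%:R * dl)) <= rho by rewrite ler_piMr.
have : rho ^+ j * dl <= dl by rewrite ler_piMl.
nra.
Qed.

Lemma conv_D (m : nat) (dl : R) (cls : nat -> gT -> bool) (h : gT) :
  (0 < m)%N -> 0 < dl ->
  (forall l t, (0 < l)%N -> 0 < D l t -> cls l t.1) ->
  (forall l g, cls l (h * g)%g = cls l g) ->
  (forall l g, cls (l + m)%N g = cls l g) ->
  (forall l s t, cls l s.1 -> cls l t.1 -> dl <= Pn m s t) ->
  forall eps, 0 < eps -> exists N, forall l, (N <= l)%N -> E h l < eps.
Proof.
move=> m0 dl0 supp clsh clsm Kpos eps eps0.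
have nonempty : forall l, (0 < l)%N -> exists t : state, cls l t.1.
  move=> l hl; have := dist_sum hl => e.
  have hp : 0 < \sum_t D l t by rewrite e ltr01.
  have [t ht] := sum_pos_ex (fun t => dist_ge0 l t) hp.
  by exists t; exact: supp.
have dl1 : dl <= 1.
  have [t ht] := nonempty 1%N isT.
  apply: le_trans (Kpos _ _ _ ht ht) _; rewrite -(ntrans_sum m t).
  by rewrite (bigD1 t) //= lerDl; apply: sumr_ge0 => u _; exact: ntrans_ge0.
have etaC : forall l s, (0 < l)%N -> ~~ cls l s.1 -> eta h l s = 0.
  move=> l s hl hc; rewrite /eta.
  have z : forall u : state, ~~ cls l u.1 -> D l u = 0.
    move=> u hu; apply: le_anti; rewrite dist_ge0 andbT leNgt.
    by apply/negP => /(supp _ _ hl); apply/negP.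
  by rewrite !z ?subrr // /tau /= clsh.
have contr : forall l, (0 < l)%N -> E h (l + m) <= (1 - dl) * E h l.
  move=> l hl; have [t0 ht0] := nonempty l hl.
  rewrite /E; under eq_bigr do rewrite eta_step //.
  exact: (@contract (Pn m) [pred s | cls l s.1] dl (eta h l) t0 (@ntrans_ge0 m)
    (@ntrans_sum m) (fun s t => Kpos l s t) (fun s hc => etaC l s hl hc) (eta_sum h hl) ht0 (ltW dl0)).
have geomE : forall j l, (1 + j * m <= l)%N -> E h l <= 2 * (1 - dl) ^+ j.
  elim=> [|j IH] l hl; first by rewrite expr0 mulr1 E_le2 //; lia.
  have -> : l = ((l - m) + m)%N by lia.
  apply: le_trans (contr _ _) _; first by lia.
  rewrite exprS mulrCA; apply: ler_wpM2l; first by lra.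
  apply: IH; lia.
set j := Num.Def.archi_bound (2 / (eps * dl)).
have hj : 2 / (eps * dl) < j%:R by apply: archi_boundP; apply: divr_ge0 => //; apply: mulr_ge0; exact: ltW.
exists (1 + j * m)%N => l hl.
apply: le_lt_trans (geomE j l hl) _.
have g1 : 0 <= 1 - dl by lra.
have g2 : 1 - dl + dl = 1 by lra.
have g := @geom (1 - dl) dl j g1 g2 (ltW dl0).
have pos1 : 0 < 1 + j%:R * dl by have := ler0n R j; nra.
have h2 : 2 < eps * (1 + j%:R * dl).
  have : 2 < j%:R * (eps * dl).
    by rewrite -ltr_pdivrMr ?mulr_gt0.
  nra.
have : 2 * (1 - dl) ^+ j * (1 + j%:R * dl) < eps * (1 + j%:R * dl).
  by apply: le_lt_trans h2; rewrite -mulrA -[X in _ <= X]mulr1 ler_wpM2l.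
by rewrite ltr_pM2r.
Qed.

Lemma finmin (T : finType) (Pr : pred T) (F : T -> R) :
  (forall i, Pr i -> 0 < F i) -> exists2 dl, 0 < dl & forall i, Pr i -> dl <= F i.
Proof.
move=> hF; set S := \sum_(i | Pr i) (F i)^-1.
have S0 : 0 <= S by apply: sumr_ge0 => i /hF /ltW; rewrite invr_ge0.
exists (S + 1)^-1; first by rewrite invr_gt0; lra.
move=> i hi; rewrite -[F i]invrK lef_pV2 ?posrE ?invr_gt0 ?hF //; last by lra.
rewrite /S (bigD1 i) //= -addrA lerDl; apply: addr_ge0 => //.
by apply: sumr_ge0 => j /andP[/hF /ltW]; rewrite invr_ge0.
Qed.

Lemma summed_sum l : (0 < l)%N -> \sum_g summed x alpha beta l g = 1.
Proof.
move=> hl; rewrite /summed.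
rewrite (pair_big xpredT xpredT (fun g a => D l (g, a))) /=.
by rewrite -[RHS](dist_sum hl); apply: eq_bigr => -[].
Qed.

Lemma summed_diff l g h :
  `|summed x alpha beta l g - summed x alpha beta l (h * g)| <= E h l.
Proof.
rewrite /summed -sumrB.
apply: le_trans (ler_norm_sum _ _ _) _; rewrite /E.
have -> : \sum_s `|eta h l s| = \sum_g' \sum_a `|eta h l (g', a)|.
  rewrite (pair_big xpredT xpredT (fun g a => `|eta h l (g, a)|)) /=.
  by apply: eq_bigr => -[].
rewrite (bigD1 g) //= lerDl; apply: sumr_ge0 => g' _; apply: sumr_ge0 => a _.
exact: normr_ge0.
Qed.

Lemma limit_gen (u : nat -> gT -> R) (A : {set gT}) (g : gT) :
  (0 < #|A|)%N ->
  (forall l, (0 < l)%N -> \sum_(h in A) u l (h * g)%g = 1) ->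
  (forall h, h \in A -> forall eps, 0 < eps -> exists N, forall l, (N <= l)%N ->
      `|u l g - u l (h * g)%g| < eps) ->
  converges_to (fun l => u l g) (#|A|%:R)^-1.
Proof.
move=> A0 hsum hconv eps eps0.
have : forall h, exists N, forall l, (N <= l)%N -> h \in A -> `|u l g - u l (h * g)%g| < eps.
  move=> h; case hA: (h \in A); last by exists 0%N.
  by have [N hN] := hconv h hA eps eps0; exists N => l hl _; exact: hN.
move=> /fin_all_exists [f hf].
exists (\max_h f h).+1 => l hl.
have hl0 : (0 < l)%N by apply: leq_trans hl.
have cA : 0 < (#|A|%:R : R) by rewrite ltr0n.
have e : u l g - (#|A|%:R)^-1 = (\sum_(h in A) (u l g - u l (h * g)%g)) / #|A|%:R.
  rewrite sumrB hsum // sumr_const -[u l g *+ _]mulr_natr; field.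
  by rewrite gt_eqF.
rewrite e normrM normfV (ger0_norm (ltW cA)) ltr_pdivrMr //.
apply: le_lt_trans (ler_norm_sum _ _ _) _.
have -> : eps * #|A|%:R = \sum_(h in A) eps by rewrite sumr_const mulr_natr.
apply: ltr_sum.
  by case/card_gt0P: A0 => h0 hh0; apply/hasP; exists h0; rewrite ?mem_index_enum.
move=> h hA; apply: hf => //; apply: leq_trans (ltnW hl); exact: leq_bigmax.
Qed.

Lemma E_conv_limit (u : nat -> gT -> R) (A : {set gT}) (g : gT) (f : nat -> nat) :
  (forall N, exists L, forall l, (L <= l)%N -> (N <= f l)%N) ->
  (forall h, h \in A -> forall eps, 0 < eps -> exists N, forall l, (N <= l)%N -> E h l < eps) ->
  (forall l g', u l g' = summed x alpha beta (f l) g') ->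
  forall h, h \in A -> forall eps, 0 < eps -> exists N, forall l, (N <= l)%N ->
      `|u l g - u l (h * g)%g| < eps.
Proof.
move=> hf hE hu h hA eps eps0; have [N hN] := hE h hA eps eps0.
have [L hL] := hf N; exists L => l hl; rewrite !hu.
apply: le_lt_trans (summed_diff _ _ _) _; apply: hN; exact: hL.
Qed.

Lemma sum_shift (F : gT -> R) (A : {set gT}) g :
  \sum_(h in A) F (h * g)%g = \sum_(g' | (g' * g^-1)%g \in A) F g'.
Proof.
rewrite (reindex_inj (mulIg (g^-1)%g)) /=.
by apply: eq_bigr => g' _; rewrite mulgKV.
Qed.

Lemma summed_zero l g : (g \notin Hs) != odd l -> Hs != [set: gT] ->
  summed x alpha beta l g = 0.
Proof.
move=> hc HnT; rewrite /summed; apply: big1 => a _.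
case: l hc => [|l] hc; first by [].
apply: le_anti; rewrite dist_ge0 andbT leNgt; apply/negP => hp.
by have := dist_par HnT (ltn0Sn l) hp; move/eqP: hc.
Qed.

Lemma class_sum l g : Hs != [set: gT] -> (0 < l)%N -> (g \notin Hs) = odd l ->
  \sum_(h in Hs) summed x alpha beta l (h * g)%g = 1.
Proof.
move=> HnT hl hg; rewrite sum_shift -(summed_sum hl) [RHS]big_mkcond /=.
rewrite big_mkcond /=; apply: eq_bigr => g' _; case: ifP => // hin.
rewrite summed_zero //; apply: (contraFN _ hin) => /eqP e.
by rewrite -(negbK (_ \in _)) parM // groupV e hg addbb.
Qed.

Lemma main_sec :
  (aperiodic x alpha ->
     forall g : gT,
       converges_to (fun l => summed x alpha beta l g) (#|[set: gT]|%:R)^-1)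
  /\
  (~ aperiodic x alpha ->
     exists H : {group gT},
       #|[set: gT] : H|%g = 2%N /\
       (forall i : 'I_n, x i \notin H) /\
       (forall g : gT,
          converges_to (fun l => summed x alpha beta (2 * l) g)
            (if g \in H then (#|H|%:R)^-1 else 0)) /\
       (forall g : gT,
          converges_to (fun l => summed x alpha beta (2 * l).+1 g)
            (if g \in H then 0 else (#|~: (H : {set gT})|%:R)^-1))).
Proof.
case: (boolP (Hs == [set: gT])) => [/eqP HT|HnT].
  have hx : x i1 \in Hs by rewrite HT inE.
  have [M hM] := primitive hx.
  have [dl dl0 hdl] := @finmin _ (fun p : state * state => true)
     (fun p => Pn M.+1 p.1 p.2) (fun p _ => hM p.1 p.2 M.+1 (leqnSn M)).
  have hE := fun h => @conv_D M.+1 dl (fun _ _ => true) h (ltn0Sn M) dl0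
     (fun _ _ _ _ => isT) (fun _ _ => erefl) (fun _ _ => erefl)
     (fun l s t _ _ => hdl (s, t) isT).
  split.
    move=> _ g; apply: limit_gen.
    - by apply/card_gt0P; exists g; rewrite inE.
    - move=> l hl; rewrite sum_shift -(summed_sum hl).
      by apply: eq_bigl => g'; rewrite inE.
    - apply: (@E_conv_limit _ _ g id) => //.
        by move=> N; exists N.
      by move=> h _; exact: hE.
  move=> hna; exfalso; apply: hna => s d hd.
  have h1 := hd M.+1 isT (hM s s M.+1 (leqnSn M)).
  have h2 := hd M.+2 isT (hM s s M.+2 (leqW (leqnSn M))).
  by apply/eqP; rewrite -dvdn1 -(dvdn_addr 1 h1) addn1.
split.
  move=> hap; exfalso.
  suff : (2 = 1)%N by []. apply: (hap T0) => l hl hp.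
  by rewrite dvdn2 -(pos_par HnT hp) mulVg group1.
move=> _.
exists (<<[set (x ij.1 * x ij.2)%g | ij : 'I_n * 'I_n]>>%G).
rewrite (index2 HnT); split => //; split; first exact: x_notin.
rewrite [gval _]/= -/Hs.
have [M hM] := even_prim HnT.
set m := (2 * M.+1)%N.
have [dl dl0 hdl] := @finmin _ (fun p : state * state => (p.1.1^-1 * p.2.1)%g \in Hs)
     (fun p => Pn m p.1 p.2) (fun p hp => hM p.1 p.2 M.+1 (leqnSn M) hp).
set cls := fun l (g : gT) => (g \notin Hs) == odd l.
have hE : forall h, h \in Hs -> forall eps, 0 < eps ->
    exists N, forall l, (N <= l)%N -> E h l < eps.
  move=> h hh; apply: (@conv_D m dl cls h) => //.
  - move=> l t hl hp; rewrite /cls; apply/eqP; exact: dist_par.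
  - by move=> l g; rewrite /cls parM // hh.
  - by move=> l g; rewrite /cls /m oddD oddM andFb addbF.
  - move=> l s t /eqP h1 /eqP h2; apply: (hdl (s, t)) => /=.
    by rewrite -(negbK (_ \in _)) parM // groupV h1 h2 addbb.
split.
  move=> g; case: ifP => hg.
    apply: (@limit_gen (fun l g => summed x alpha beta (2 * l) g) Hs g).
    - by apply/card_gt0P; exists 1%g; exact: group1.
    - move=> l hl; apply: class_sum => //; first by rewrite muln_gt0.
      by rewrite hg oddM.
    - apply: (@E_conv_limit (fun l g => summed x alpha beta (2 * l) g) Hs g (fun l => 2 * l)%N) => //.
      by move=> N; exists N => l hl; lia.
  move=> eps eps0; exists 0%N => l _.
  by rewrite summed_zero ?subrr ?normr0 // hg oddM.
move=> g; case: ifP => hg.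
  move=> eps eps0; exists 0%N => l _.
  by rewrite summed_zero ?subrr ?normr0 // hg /= oddM.
rewrite card_compl //; apply: (@limit_gen (fun l g => summed x alpha beta (2 * l).+1 g) Hs g).
- by apply/card_gt0P; exists 1%g; exact: group1.
- move=> l hl; apply: class_sum => //.
  by rewrite hg /= oddM.
- apply: (@E_conv_limit (fun l g => summed x alpha beta (2 * l).+1 g) Hs g (fun l => (2 * l).+1)%N) => //.
  by move=> N; exists N => l hl; lia.
Qed.

End Main.

Unset Implicit Arguments.

Theorem mainTheorem6 (R : archiRealFieldType) (gT : finGroupType) (n : nat)
  (x : 'I_n -> gT) (alpha : sidx n -> sidx n -> R) (beta : sidx n -> R) :
  (2 <= n)%N ->
  <<[set x i | i : 'I_n]>>%g = [set: gT] ->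
  (forall a b : sidx n, b != sopp a -> 0 < alpha a b) ->
  (forall a : sidx n, \sum_(b : sidx n | b != sopp a) alpha a b = 1) ->
  (forall a : sidx n, 0 < beta a) ->
  \sum_(a : sidx n) beta a = 1 ->
  (aperiodic x alpha ->
     forall g : gT,
       converges_to (fun l => summed x alpha beta l g) (#|[set: gT]|%:R)^-1)
  /\
  (~ aperiodic x alpha ->
     exists H : {group gT},
       #|[set: gT] : H|%g = 2%N /\
       (forall i : 'I_n, x i \notin H) /\
       (forall g : gT,
          converges_to (fun l => summed x alpha beta (2 * l) g)
            (if g \in H then (#|H|%:R)^-1 else 0)) /\
       (forall g : gT,
          converges_to (fun l => summed x alpha beta (2 * l).+1 g)
            (if g \in H then 0 else (#|~: (H : {set gT})|%:R)^-1))).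
Proof.
move=> Hn Hgen Hapos Hasum Hbpos Hbsum.
apply: main_sec; assumption.
Qed.
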